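(* Let $G$ be a $q$-cut-dense graph of order $n$. For any $U\subseteq V(G)$ with $|U|\le qn/8$, the graph $G\setminus U$ is $q/2$-cut-dense.
   Context: A graph $G$ is $q$-cut-dense if for every partition $V(G)=A\cup B$ into disjoint sets, $e_G(A,B)\ge q|A||B|$, where $e_G(A,B)$ is the number of edges of $G$ with one endpoint in $A$ and the other in $B$. $G\setminus U$ denotes $G$ with the vertices of $U$ deleted. *)

(* Defs.v *)
From HB Require Import structures.
From mathcomp Require Import all_boot all_order all_algebra.
Set Implicit Arguments. Unset Strict Implicit. Unset Printing Implicit Defensive.
Import Order.TTheory GRing.Theory Num.Theory.
Local Open Scope ring_scope.

Definition simple_graph (T : finType) (e : rel T) : Prop :=
  symmetric e /\ irreflexive e.

(* e_G(A,B): number of edges with one endpoint in A and the other in B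
   (for disjoint A, B each such edge corresponds to exactly one pair (a,b)
   with a in A, b in B). *)
Definition e_between (T : finType) (e : rel T) (A B : {set T}) : nat :=
  #|[set p : T * T | [&& p.1 \in A, p.2 \in B & e p.1 p.2]]|.

(* The induced subgraph G[S] is q-cut-dense: for every partition S = A ∪ B
   into disjoint sets, e(A,B) >= q |A| |B|. *)
Definition cut_dense_on (R : realFieldType) (T : finType) (e : rel T) (q : R)
    (S : {set T}) : Prop :=
  forall A B : {set T}, A :|: B = S -> [disjoint A & B] ->
    q * #|A|%:R * #|B|%:R <= (e_between e A B)%:R.

Definition cut_dense (R : realFieldType) (T : finType) (e : rel T) (q : R) : Prop :=
  cut_dense_on e q [set: T].

(* Main.v *)
Require Import Defs.
From mathcomp Require Import all_boot all_order all_algebra.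
From mathcomp Require Import lra.
Import Order.TTheory GRing.Theory Num.Theory.
Local Open Scope ring_scope.

Lemma eb_U (T : finType) (e : rel T) (A B C : {set T}) :
  (e_between e A (B :|: C) <= e_between e A B + e_between e A C)%N.
Proof.
rewrite /e_between; apply: leq_trans (leq_card_setU _ _).
apply: subset_leq_card; apply/subsetP => p; rewrite !inE.
by case/and3P=> a /orP[] b c; rewrite a b c ?orbT.
Qed.

Lemma eb_X (T : finType) (e : rel T) (A B : {set T}) :
  (e_between e A B <= #|A| * #|B|)%N.
Proof.
rewrite -cardsX; apply: subset_leq_card; apply/subsetP => p; rewrite !inE.
by case/and3P=> -> ->.
Qed.

Lemma eb_sym (T : finType) (e : rel T) (A B : {set T}) :
  symmetric e -> e_between e A B = e_between e B A.
Proof.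
move=> se; rewrite /e_between.
have inj : injective (fun p : T * T => (p.2, p.1)) by move=> [? ?] [? ?] [-> ->].
rewrite -(card_imset _ inj); apply: eq_card => p.
apply/imsetP/idP.
  by case=> [[x y]]; rewrite !inE /= => /and3P[? ? ?] ->; rewrite /= se; apply/and3P.
case: p => x y; rewrite !inE /= => /and3P[? ? ?]; exists (y, x) => //.
by rewrite !inE /= se; apply/and3P.
Qed.

Lemma key (R : realFieldType) (T : finType) (e : rel T) (q : R) (U A B : {set T}) :
  cut_dense e q -> 0 <= q -> #|U|%:R <= q * #|T|%:R / 8 ->
  A :|: B = ~: U -> [disjoint A & B] -> (#|A| <= #|B|)%N ->
  q / 2 * #|A|%:R * #|B|%:R <= (e_between e A B)%:R.
Proof.
move=> cd q0 hU hS dAB hAB.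
have dBU : [disjoint B & U].
  by rewrite disjoints_subset -hS subsetUr.
have dA : [disjoint A & B :|: U].
  rewrite disjoints_subset setCU subsetI -disjoints_subset dAB /=.
  by rewrite -hS subsetUl.
have hP : A :|: (B :|: U) = [set: T].
  by rewrite setUA hS setUC setUCr.
have h1 := cd _ _ hP dA.
have cBU : #|B :|: U| = (#|B| + #|U|)%N.
  by apply/eqP; rewrite (leq_card_setU B U).
have h2 := @eb_U T e A B U.
have h3 := @eb_X T e A U.
have cS : (#|A| + #|B| + #|U| = #|T|)%N.
  have cAB : #|A :|: B| = (#|A| + #|B|)%N by apply/eqP; rewrite (leq_card_setU A B).
  by rewrite -(cardsC U) -hS cAB addnC.
move: h1; rewrite cBU natrD => h1.
have h2' : (e_between e A (B :|: U))%:R <= (e_between e A B)%:R + (e_between e A U)%:R :> R.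
  by rewrite -natrD ler_nat.
have h3' : (e_between e A U)%:R <= #|A|%:R * #|U|%:R :> R by rewrite -natrM ler_nat.
have cS' : #|A|%:R + #|B|%:R + #|U|%:R = #|T|%:R :> R by rewrite -!natrD cS.
have hAB' : #|A|%:R <= #|B|%:R :> R by rewrite ler_nat.
move: hU; rewrite -cS' => hU.
set a := #|A|%:R : R in h1 h3' cS' hAB' hU *.
set b := #|B|%:R : R in h1 hAB' cS' hU *.
set u := #|U|%:R : R in h1 h3' cS' hU *.
set x := (e_between e A B)%:R : R in h2' *.
set y := (e_between e A U)%:R : R in h2' h3'.
have a0 : 0 <= a by rewrite ler0n.
have b0 : 0 <= b by rewrite ler0n.
have u0 : 0 <= u by rewrite ler0n.
have hu : u * (1 - q) <= q * b / 2.
  have [q1|q1] := lerP q 1; last by nra.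
  have h4 : 0 <= q * (b - a) by apply: mulr_ge0; lra.
  have h5 : 0 <= (1 - q) * u by apply: mulr_ge0; lra.
  nra.
have h6 : q * a * b + q * a * u - a * u <= x by nra.
have h7 : 0 <= a * (q * b / 2 - u * (1 - q)) by apply: mulr_ge0; lra.
nra.
Qed.

Theorem lemma3p7 (R : realFieldType) (T : finType) (e : rel T) (q : R) :
  simple_graph e -> cut_dense e q ->
  forall U : {set T}, #|U|%:R <= q * #|T|%:R / 8 ->
    cut_dense_on e (q / 2) (~: U).
Proof.
move=> [se _] cd U hU A B hS dAB.
have [q0|qn] := lerP 0 q; last first.
  apply: le_trans (ler0n _ _).
  have h := mulr_ge0 (ler0n R #|A|) (ler0n R #|B|); nra.
have [le|lt] := leqP #|A| #|B|; first exact: (@key R T e q U A B cd q0 hU hS dAB le).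
rewrite eb_sym // mulrAC.
apply: (@key R T e q U B A cd q0 hU) => //; first by rewrite setUC.
  by rewrite disjoint_sym.
exact: ltnW.
Qed.
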